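(* Let $\Phi$ be a real $N\times d$ matrix satisfying the Restricted Isometry Condition with parameters $(2n,\varepsilon)$, $\varepsilon = 0.03/\sqrt{\log n}$, let $v \ne 0$ be $n$-sparse, $x = \Phi v$, and consider an iteration of ROMP run on $x$ with sparsity level $n$, with $I$ the index set and $r\ne0$ the residual at the start of that iteration, $u = \Phi^* r$, and $J$ the set chosen in the identification step of that iteration. Let $v_0 = v|_{\mathrm{supp}(v)\setminus I}$ (equal to $v$ on $\mathrm{supp}(v)\setminus I$, $0$ elsewhere). Then $\|u|_J\|_2 \ge 0.8\,\|v_0\|_2$.
   Context: A vector is $n$-sparse if it has at most $n$ nonzero coordinates. $\Phi$ satisfies the Restricted Isometry Condition with parameters $(m,\varepsilon)$ if $(1-\varepsilon)\|w\|_2 \le \|\Phi w\|_2 \le (1+\varepsilon)\|w\|_2$ for all $m$-sparse $w$. $y|_T$ is the restriction of $y$ to coordinates in $T$. ROMP with input $x$ and sparsity level $n$: Initialize $I=\emptyset$, $r=x$. Repeat until $r=0$: (Identify) $u=\Phi^*r$, choose a set $J$ of the $n$ biggest coordinates of $u$ in magnitude, or all nonzero coordinates of $u$, whichever set is smaller; (Regularize) among subsets $J_0\subset J$ with $|u(i)|\le 2|u(j)|$ for all $i,j\in J_0$, choose one maximizing $\|u|_{J_0}\|_2$; (Update) $I\leftarrow I\cup J_0$, $y=\operatorname{argmin}_{z\in\mathbb{R}^I}\|x-\Phi z\|_2$, $r=x-\Phi y$. Output $I$. *)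

(* Defs.v *)
From HB Require Import structures.
From mathcomp Require Import all_boot all_order all_algebra.
From mathcomp Require Import reals exp.
Set Implicit Arguments. Unset Strict Implicit. Unset Printing Implicit Defensive.
Import Order.TTheory GRing.Theory Num.Theory.
Local Open Scope ring_scope.

Section ROMP.
Variable R : realType.

Definition norm2 (m : nat) (w : 'cV[R]_m) : R :=
  Num.sqrt (\sum_(i < m) w i 0 ^+ 2).

Definition supp (m : nat) (w : 'cV[R]_m) : {set 'I_m} :=
  [set i | w i 0 != 0].

Definition sparse (m n : nat) (w : 'cV[R]_m) : Prop := (#|supp w| <= n)%N.

Definition restrict (m : nat) (T : {set 'I_m}) (w : 'cV[R]_m) : 'cV[R]_m :=
  \col_i (if i \in T then w i 0 else 0).

Definition RIC (N d : nat) (Phi : 'M[R]_(N, d)) (m : nat) (eps : R) : Prop :=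
  forall w : 'cV[R]_d, sparse m w ->
    (1 - eps) * norm2 w <= norm2 (Phi *m w) /\
    norm2 (Phi *m w) <= (1 + eps) * norm2 w.

Definition identify (m n : nat) (u : 'cV[R]_m) (J : {set 'I_m}) : Prop :=
  if (#|supp u| <= n)%N then J = supp u
  else #|J| = n /\
       (forall i j, i \in J -> j \notin J -> `|u j 0| <= `|u i 0|).

Definition comparable_set (m : nat) (u : 'cV[R]_m) (J0 : {set 'I_m}) : Prop :=
  forall i j, i \in J0 -> j \in J0 -> `|u i 0| <= 2 * `|u j 0|.

Definition regularize (m : nat) (u : 'cV[R]_m) (J J0 : {set 'I_m}) : Prop :=
  J0 \subset J /\ comparable_set u J0 /\
  forall J1 : {set 'I_m}, J1 \subset J -> comparable_set u J1 ->
    norm2 (restrict J1 u) <= norm2 (restrict J0 u).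

Definition lsq (N d : nat) (Phi : 'M[R]_(N, d)) (x : 'cV[R]_N)
  (I : {set 'I_d}) (y : 'cV[R]_d) : Prop :=
  supp y \subset I /\
  forall z : 'cV[R]_d, supp z \subset I ->
    norm2 (x - Phi *m y) <= norm2 (x - Phi *m z).

(* (I, r) is the state (index set, residual) at the start of some iteration
   of ROMP run on x with sparsity level n (any admissible tie-breaking). *)
Inductive romp_state (N d : nat) (Phi : 'M[R]_(N, d)) (x : 'cV[R]_N) (n : nat)
  : {set 'I_d} -> 'cV[R]_N -> Prop :=
| romp_init : romp_state Phi x n set0 x
| romp_next : forall I r J J0 y,
    romp_state Phi x n I r -> r != 0 ->
    identify n (Phi^T *m r) J ->
    regularize (Phi^T *m r) J J0 ->
    lsq Phi x (I :|: J0) y ->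
    romp_state Phi x n (I :|: J0) (x - Phi *m y).

End ROMP.

(* Main.v *)
Require Import Defs.
From HB Require Import structures.
From mathcomp Require Import all_boot all_order all_algebra.
From mathcomp Require Import reals exp.
From mathcomp Require Import ring lra.
Import Order.TTheory GRing.Theory Num.Theory.
Local Open Scope ring_scope.
Set Implicit Arguments. Unset Strict Implicit.

Definition dot {R : realType} {m : nat} (p q : 'cV[R]_m) : R :=
  \sum_(i < m) p i 0 * q i 0.
Definition sq {R : realType} {m : nat} (p : 'cV[R]_m) : R := dot p p.

Lemma norm2E {R : realType} m (p : 'cV[R]_m) : norm2 p = Num.sqrt (sq p).
Proof. by rewrite /norm2 /sq /dot; congr Num.sqrt; apply: eq_bigr => i _; rewrite expr2. Qed.

Lemma sq_ge0 {R : realType} m (p : 'cV[R]_m) : 0 <= sq p.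
Proof. by apply: sumr_ge0 => i _; rewrite -expr2 sqr_ge0. Qed.

Lemma sq_eq0 {R : realType} m (p : 'cV[R]_m) : sq p = 0 -> p = 0.
Proof.
move=> /eqP; rewrite /sq /dot psumr_eq0 => [/allP H|i _]; last by rewrite -expr2 sqr_ge0.
apply/matrixP => i j; rewrite (ord1 j) mxE.
by have /implyP := H i (mem_index_enum _) => /(_ isT); rewrite -expr2 sqrf_eq0 => /eqP.
Qed.

Lemma dotC {R : realType} m (p q : 'cV[R]_m) : dot p q = dot q p.
Proof. by apply: eq_bigr => i _; rewrite mulrC. Qed.

Lemma dotDl {R : realType} m (p q s : 'cV[R]_m) : dot (p + q) s = dot p s + dot q s.
Proof. by rewrite /dot -big_split; apply: eq_bigr => i _; rewrite !mxE mulrDl. Qed.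

Lemma dotBl {R : realType} m (p q s : 'cV[R]_m) : dot (p - q) s = dot p s - dot q s.
Proof. by rewrite /dot -sumrB; apply: eq_bigr => i _; rewrite !mxE mulrBl. Qed.

Lemma dotZl {R : realType} m (c : R) (p s : 'cV[R]_m) : dot (c *: p) s = c * dot p s.
Proof. by rewrite /dot mulr_sumr; apply: eq_bigr => i _; rewrite !mxE mulrA. Qed.

Lemma dotNl {R : realType} m (p s : 'cV[R]_m) : dot (- p) s = - dot p s.
Proof. by rewrite /dot -sumrN; apply: eq_bigr => i _; rewrite !mxE mulNr. Qed.
Lemma dotNr {R : realType} m (p s : 'cV[R]_m) : dot s (- p) = - dot s p.
Proof. by rewrite dotC dotNl dotC. Qed.

Lemma dotDr {R : realType} m (p q s : 'cV[R]_m) : dot s (p + q) = dot s p + dot s q.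
Proof. by rewrite dotC dotDl !(dotC s). Qed.
Lemma dotBr {R : realType} m (p q s : 'cV[R]_m) : dot s (p - q) = dot s p - dot s q.
Proof. by rewrite dotC dotBl !(dotC s). Qed.
Lemma dotZr {R : realType} m (c : R) (p s : 'cV[R]_m) : dot s (c *: p) = c * dot s p.
Proof. by rewrite dotC dotZl dotC. Qed.

Lemma dotE {R : realType} m (p q : 'cV[R]_m) : dot p q = (p^T *m q) 0 0.
Proof. by rewrite mxE; apply: eq_bigr => i _; rewrite mxE. Qed.

Lemma dot_mul {R : realType} N d (Phi : 'M[R]_(N, d)) (a : 'cV[R]_d) (b : 'cV[R]_N) :
  dot (Phi *m a) b = dot a (Phi^T *m b).
Proof. by rewrite !dotE trmx_mul mulmxA. Qed.

Lemma CS {R : realType} m (p q : 'cV[R]_m) : dot p q ^+ 2 <= sq p * sq q.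
Proof.
have [/sq_eq0 ->|] := eqVneq (sq q) 0.
  rewrite /dot big1 ?expr2 ?mul0r; first by apply: mulr_ge0; apply: sq_ge0.
  by move=> i _; rewrite mxE mulr0.
move=> hq; have hq0 : 0 < sq q by rewrite lt0r hq sq_ge0.
have := sq_ge0 (sq q *: p - dot p q *: q).
rewrite /sq dotBl !dotBr !dotZl !dotZr -/(sq p) -/(sq q) (dotC q p) => H.
have : 0 <= sq q * (sq q * sq p - dot p q ^+ 2) by move: H; rewrite -/(sq q); nra.
rewrite pmulr_rge0 // subr_ge0 => H2; lra.
Qed.

Lemma suppP {R : realType} m (w : 'cV[R]_m) (A : {set 'I_m}) :
  reflect (forall i, i \notin A -> w i 0 = 0) (supp w \subset A).
Proof.
apply: (iffP subsetP) => H i.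
  by move=> hA; apply/eqP; apply: contraNT hA => hw; apply: H; rewrite inE.
by rewrite inE => hw; apply: contraNT hw => /H ->.
Qed.

Lemma sparse_sub {R : realType} m k (w : 'cV[R]_m) (A : {set 'I_m}) :
  supp w \subset A -> (#|A| <= k)%N -> sparse k w.
Proof. by move=> /subset_leq_card h1 h2; apply: leq_trans h2. Qed.

Lemma ric_sq {R : realType} N d (Phi : 'M[R]_(N, d)) m e (w : 'cV[R]_d) :
  RIC Phi m e -> 0 <= 1 - e -> sparse m w ->
  (1 - e) ^+ 2 * sq w <= sq (Phi *m w) /\ sq (Phi *m w) <= (1 + e) ^+ 2 * sq w.
Proof.
move=> H he hs; have [h1 h2] := H w hs; rewrite !norm2E in h1 h2.
rewrite -(sqr_sqrtr (sq_ge0 w)) -(sqr_sqrtr (sq_ge0 (Phi *m w))).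
set a := Num.sqrt (sq w) in h1 h2 *; set b := Num.sqrt _ in h1 h2 *.
have ha : 0 <= a := sqrtr_ge0 _. have hb : 0 <= b := sqrtr_ge0 _.
have hea : 0 <= (1 - e) * a by apply: mulr_ge0.
split; nra.
Qed.

Lemma supp_lin {R : realType} m (a b : 'cV[R]_m) (A B : {set 'I_m}) (x y : R) :
  supp a \subset A -> supp b \subset B -> supp (x *: a + y *: b) \subset A :|: B.
Proof.
move=> /suppP ha /suppP hb; apply/suppP => i; rewrite inE negb_or => /andP[i1 i2].
by rewrite !mxE ha // hb // !mulr0 addr0.
Qed.

Lemma dot_disj {R : realType} m (a b : 'cV[R]_m) (A B : {set 'I_m}) :
  supp a \subset A -> supp b \subset B -> A :&: B = set0 -> dot a b = 0.
Proof.
move=> /suppP ha /suppP hb hAB; apply: big1 => i _.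
case: (boolP (i \in A)) => iA; last by rewrite ha // mul0r.
have iB : i \notin B by apply/negP => iB; have := in_set0 i; rewrite -hAB inE iA iB.
by rewrite hb // mulr0.
Qed.

Lemma polar0 {R : realType} N d (Phi : 'M[R]_(N, d)) m e (a b : 'cV[R]_d) (A B : {set 'I_d}) :
  RIC Phi m e -> 0 <= 1 - e ->
  supp a \subset A -> supp b \subset B -> A :&: B = set0 -> (#|A :|: B| <= m)%N ->
  dot (Phi *m a) (Phi *m b) <= e * (sq a + sq b).
Proof.
move=> H he sa sb hAB hc.
have d0 := dot_disj sa sb hAB.
have s1 : sparse m (a + b).
  by apply: sparse_sub hc; have := supp_lin 1 1 sa sb; rewrite !scale1r.
have s2 : sparse m (a - b).
  by apply: sparse_sub hc; have := supp_lin 1 (-1) sa sb; rewrite scale1r scaleN1r.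
have [h1 _] := ric_sq H he s2; have [_ h2] := ric_sq H he s1.
move: h1 h2; rewrite /sq !mulmxBr !mulmxDr !(dotDl, dotBl, dotDr, dotBr, dotNl, dotNr).
rewrite (dotC b a) d0 (dotC (Phi *m b) (Phi *m a)) -!/(sq _).
move=> h1 h2; nra.
Qed.

Lemma supp_scale {R : realType} m (a : 'cV[R]_m) (A : {set 'I_m}) (x : R) :
  supp a \subset A -> supp (x *: a) \subset A.
Proof. by move=> /suppP ha; apply/suppP => i iA; rewrite mxE ha // mulr0. Qed.

Lemma sqZ {R : realType} m (a : 'cV[R]_m) (x : R) : sq (x *: a) = x ^+ 2 * sq a.
Proof. by rewrite /sq dotZl dotZr mulrA expr2. Qed.

Lemma sqE2 {R : realType} m (a : 'cV[R]_m) : sq a = norm2 a ^+ 2.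
Proof. by rewrite norm2E sqr_sqrtr // sq_ge0. Qed.

Lemma dot0l {R : realType} m (a : 'cV[R]_m) : dot 0 a = 0.
Proof. by apply: big1 => i _; rewrite mxE mul0r. Qed.

Lemma polar {R : realType} N d (Phi : 'M[R]_(N, d)) m e (a b : 'cV[R]_d) (A B : {set 'I_d}) :
  RIC Phi m e -> 0 <= 1 - e -> 0 <= e ->
  supp a \subset A -> supp b \subset B -> A :&: B = set0 -> (#|A :|: B| <= m)%N ->
  dot (Phi *m a) (Phi *m b) <= 2 * e * norm2 a * norm2 b.
Proof.
move=> H he he0 sa sb hAB hc.
have [na0|na0] := eqVneq (norm2 a) 0.
  have : sq a = 0 by rewrite sqE2 na0 expr2 mul0r.
  move/sq_eq0 => a0; have -> : Phi *m a = 0 by rewrite a0 mulmx0.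
  by rewrite dot0l na0 mulr0 mul0r.
have [nb0|nb0] := eqVneq (norm2 b) 0.
  have : sq b = 0 by rewrite sqE2 nb0 expr2 mul0r.
  move/sq_eq0 => b0; have -> : Phi *m b = 0 by rewrite b0 mulmx0.
  by rewrite dotC dot0l nb0 mulr0.
have := polar0 H he (supp_scale (norm2 b) sa) (supp_scale (norm2 a) sb) hAB hc.
rewrite -!scalemxAr dotZl dotZr !sqZ !sqE2.
have ha : 0 < norm2 a by rewrite lt0r na0 norm2E sqrtr_ge0.
have hb : 0 < norm2 b by rewrite lt0r nb0 norm2E sqrtr_ge0.
set x := norm2 a; set y := norm2 b; set D := dot _ _ => h.
have hxy : 0 < y * x by apply: mulr_gt0.
have : y * x * D <= y * x * (2 * e * x * y) by move: h; rewrite mulrA; nra.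
by rewrite ler_pM2l.
Qed.

Lemma le_norm2 {R : realType} m (p q : 'cV[R]_m) : (norm2 p <= norm2 q) = (sq p <= sq q).
Proof. by rewrite !norm2E ler_sqrt // sq_ge0. Qed.

Lemma sqB {R : realType} m (p q : 'cV[R]_m) (t : R) :
  sq (p - t *: q) = sq p - 2 * t * dot p q + t ^+ 2 * sq q.
Proof. rewrite /sq dotBl !dotBr !dotZl !dotZr (dotC q p); ring. Qed.

Lemma lsq_orth {R : realType} N d (Phi : 'M[R]_(N, d)) (x : 'cV[R]_N) I (y z : 'cV[R]_d) :
  lsq Phi x I y -> supp z \subset I -> dot (x - Phi *m y) (Phi *m z) = 0.
Proof.
move=> [sy H] sz.
set D := dot _ _; set Q := sq (Phi *m z).
have hQ : 0 <= Q := sq_ge0 _.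
set t := D / (Q + 1).
have hD : D = t * (Q + 1) by rewrite /t mulfVK // gt_eqF // ltr_wpDl.
have sz' : supp (y + t *: z) \subset I.
  by have := supp_lin 1 t sy sz; rewrite setUid scale1r.
have := H _ sz'; rewrite le_norm2 mulmxDr -scalemxAr opprD addrA sqB.
rewrite -/D -/Q => h.
have ht : t ^+ 2 * (Q + 2) <= 0 by rewrite hD in h; nra.
have : t = 0.
  apply/eqP; rewrite -sqrf_eq0 eq_le sqr_ge0 andbT.
  by rewrite -(pmulr_lle0 _ (_ : 0 < Q + 2)) // ltr_wpDl.
by rewrite hD => ->; rewrite mul0r.
Qed.

Lemma CSn {R : realType} m (p q : 'cV[R]_m) : `|dot p q| <= norm2 p * norm2 q.
Proof.
have h := CS p q; rewrite !sqE2 -exprMn in h.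
rewrite -(ger0_norm (_ : 0 <= norm2 p * norm2 q)); last by rewrite mulr_ge0 // norm2E sqrtr_ge0.
by rewrite -ler_sqr ?nnegrE ?normr_ge0 // !real_normK ?num_real.
Qed.

Lemma restrictE {R : realType} m (T : {set 'I_m}) (w : 'cV[R]_m) i j :
  restrict T w i j = if i \in T then w i 0 else 0.
Proof. by rewrite mxE. Qed.

Lemma supp_restrict {R : realType} m (T : {set 'I_m}) (w : 'cV[R]_m) :
  supp (restrict T w) \subset T.
Proof. by apply/suppP => i iT; rewrite restrictE (negbTE iT). Qed.

Lemma dot_restrict {R : realType} m (T : {set 'I_m}) (w : 'cV[R]_m) :
  dot (restrict T w) w = sq (restrict T w).
Proof. by apply: eq_bigr => i _; rewrite !restrictE; case: (i \in T); rewrite ?mul0r. Qed.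

Lemma u_zero_I {R : realType} N d (Phi : 'M[R]_(N, d)) (x : 'cV[R]_N) I (y : 'cV[R]_d) i :
  lsq Phi x I y -> i \in I -> (Phi^T *m (x - Phi *m y)) i 0 = 0.
Proof.
move=> hl iI.
have sd : supp (delta_mx i 0 : 'cV[R]_d) \subset I.
  apply/suppP => j jI; rewrite mxE; case: eqP => // ji; by rewrite ji iI in jI.
have := lsq_orth hl sd; rewrite dotC dot_mul => <-.
rewrite /dot (bigD1 i) //= big1 ?addr0; first by rewrite [delta_mx _ _ _ _]mxE !eqxx mul1r.
by move=> j ji; rewrite [delta_mx _ _ _ _]mxE (negbTE ji) mul0r.
Qed.

From mathcomp Require Import zify.

Lemma card_SI {R : realType} d n (v : 'cV[R]_d) (I : {set 'I_d}) :
  sparse n v -> (#|I :\: supp v| <= #|I :&: supp v|)%N ->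
  (#|supp v :|: I| <= 2 * n)%N.
Proof.
rewrite /sparse => hs hi.
have h1 := cardsU (supp v) I.
have h2 := cardsID (supp v) I.
have h3 : (#|I :&: supp v| <= #|supp v|)%N by apply: subset_leq_card; apply: subsetIr.
have h4 : (#|supp v :&: I| = #|I :&: supp v|)%N by rewrite setIC.
lia.
Qed.

Lemma supp_v_v0 {R : realType} d (v : 'cV[R]_d) (I : {set 'I_d}) :
  supp (v - restrict (supp v :\: I) v) \subset I.
Proof.
apply/suppP => i iI; rewrite !mxE !inE (negbTE iI) /=.
case: (boolP (v i 0 == 0)) => [/eqP -> | _] /=; by rewrite subrr.
Qed.

Lemma state_lower {R : realType} N d n (Phi : 'M[R]_(N, d)) (v y : 'cV[R]_d) I e :
  RIC Phi (2 * n) e -> 0 <= 1 - e -> 0 <= e -> sparse n v ->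
  lsq Phi (Phi *m v) I y -> (#|I :\: supp v| <= #|I :&: supp v|)%N ->
  (1 - e) ^+ 2 * sq (restrict (supp v :\: I) v) <= sq (Phi *m v - Phi *m y) /\
  (1 - e) ^+ 4 * sq (restrict (supp v :\: I) v) <=
     sq (restrict (supp v :\: I) (Phi^T *m (Phi *m v - Phi *m y))).
Proof.
move=> H he he0 sv hl hinv.
set S := supp v; set v0 := restrict (S :\: I) v; set r := Phi *m v - Phi *m y.
have hc := card_SI sv hinv.
have [sy _] := hl.
have svy : supp (v - y) \subset S :|: I.
  by have := supp_lin 1 (-1) (subxx S) sy; rewrite scale1r scaleN1r.
have hr : r = Phi *m (v - y) by rewrite mulmxBr.
have [h1 _] := ric_sq H he (sparse_sub svy hc).
have h2 : sq v0 <= sq (v - y).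
  apply: ler_sum => i _; rewrite restrictE !mxE.
  case: (boolP (i \in S :\: I)) => [|_]; last by rewrite mul0r -expr2 sqr_ge0.
  rewrite inE => /andP[iI _]; move/suppP: sy => sy; by rewrite sy // subr0.
have low : (1 - e) ^+ 2 * sq v0 <= sq r.
  by rewrite hr; apply: le_trans h1; rewrite ler_wpM2l // sqr_ge0.
split => //.
have hdot : dot (Phi^T *m r) v0 = sq r.
  rewrite dotC -dot_mul.
  have -> : Phi *m v0 = Phi *m v - Phi *m (v - v0) by rewrite mulmxBr opprB addrC subrK.
  rewrite dotBl (dotC (Phi *m (v - v0))) (lsq_orth hl (supp_v_v0 v I)) subr0.
  have -> : Phi *m v = r + Phi *m y by rewrite /r subrK.
  by rewrite dotDl (dotC (Phi *m y)) -/r (lsq_orth hl sy) addr0.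
have hdot2 : dot (Phi^T *m r) v0 = dot (restrict (S :\: I) (Phi^T *m r)) v0.
  apply: eq_bigr => i _; rewrite !restrictE; case: (i \in S :\: I) => //.
  by rewrite !mulr0.
have hcs := CS (restrict (S :\: I) (Phi^T *m r)) v0.
rewrite -hdot2 hdot in hcs.
set E := sq (restrict _ _) in hcs *.
have hE : 0 <= E := sq_ge0 _.
have hV : 0 <= sq v0 := sq_ge0 _.
have [V0|Vp] := eqVneq (sq v0) 0; first by rewrite V0 mulr0.
have Vpos : 0 < sq v0 by rewrite lt0r Vp.
have he2 : 0 <= (1 - e) ^+ 2 * sq v0 by rewrite mulr_ge0 // sqr_ge0.
have : ((1 - e) ^+ 2 * sq v0) ^+ 2 <= E * sq v0.
  apply: le_trans hcs; by rewrite ler_pXn2r // ?nnegrE // (le_trans he2 low).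
rewrite exprMn -exprM /= expr2 mulrA ler_pM2r //.
Qed.

Lemma arith_upper {R : realType} (e na V Z nz : R) :
  0 <= e -> 0 <= 1 - e -> 0 <= na -> 0 <= V -> 0 <= Z -> 0 <= nz ->
  na ^+ 2 <= 2 * e * na * V + (1 + e) * na * Z ->
  Z ^+ 2 <= 2 * e * nz * V -> (1 - e) * nz <= Z ->
  (1 - e) * na <= 4 * e * V.
Proof.
move=> he he1 hna hV hZ hnz h1 h2 h3.
have h4 : (1 - e) * Z <= 2 * e * V.
  have [Z0|Zp] := eqVneq Z 0; first by rewrite Z0 mulr0 !mulr_ge0.
  have Zpos : 0 < Z by rewrite lt0r Zp.
  have a1 : (1 - e) * Z ^+ 2 <= (1 - e) * (2 * e * nz * V) by rewrite ler_wpM2l.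
  have a2 : (1 - e) * nz * (2 * e * V) <= Z * (2 * e * V).
    by rewrite ler_wpM2r // !mulr_ge0.
  rewrite -(ler_pM2l Zpos); nra.
have h5 : na <= 2 * e * V + (1 + e) * Z.
  have [n0|np] := eqVneq na 0; first by rewrite n0 addr_ge0 // !mulr_ge0 // addr_ge0.
  have npos : 0 < na by rewrite lt0r np.
  rewrite -(ler_pM2l npos); nra.
nra.
Qed.

Lemma state_upper {R : realType} N d n (Phi : 'M[R]_(N, d)) (v y : 'cV[R]_d) I e
  (T : {set 'I_d}) :
  RIC Phi (2 * n) e -> 0 <= 1 - e -> 0 <= e -> sparse n v ->
  lsq Phi (Phi *m v) I y -> (#|I :\: supp v| <= #|I :&: supp v|)%N ->
  T :&: supp v = set0 -> (#|T| <= n)%N ->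
  (1 - e) * norm2 (restrict T (Phi^T *m (Phi *m v - Phi *m y))) <=
    4 * e * norm2 (restrict (supp v :\: I) v).
Proof.
move=> H he he0 sv hl hinv hT hTn.
set S := supp v; set v0 := restrict (S :\: I) v; set r := Phi *m v - Phi *m y.
set a := restrict T _.
have hc := card_SI sv hinv.
have [sy _] := hl.
set z := y - (v - v0).
have sz : supp z \subset I.
  by have := supp_lin 1 (-1) sy (supp_v_v0 v I); rewrite scale1r scaleN1r setUid.
have hr : r = Phi *m v0 - Phi *m z.
  by rewrite /r /z !mulmxBr opprB addrCA addrA subrK.
have cS : (#|S| <= n)%N := sv.
have cSI : (#|S :\: I| <= n)%N by apply: leq_trans cS; apply: subset_leq_card; apply: subsetDl.
have sv0 : supp v0 \subset S :\: I := supp_restrict _ _.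
have sa : supp a \subset T := supp_restrict _ _.
have dTS : T :&: (S :\: I) = set0.
  apply/eqP; rewrite -subset0 -hT; apply: setIS; apply: subsetDl.
have cTS : (#|T :|: (S :\: I)| <= 2 * n)%N.
  by apply: leq_trans (leq_card_setU _ _) _; lia.
have p1 := polar H he he0 sa sv0 dTS cTS.
have p2 : - dot (Phi *m a) (Phi *m z) <= norm2 (Phi *m a) * norm2 (Phi *m z).
  by apply: le_trans (CSn _ _); rewrite -normrN ler_norm.
have p3 : norm2 (Phi *m a) <= (1 + e) * norm2 a.
  have sa' : sparse (2 * n) a by apply: sparse_sub sa _; lia.
  by have [] := H a sa'.
have p4 : sq (Phi *m z) = dot (Phi *m z) (Phi *m v0).
  have := lsq_orth hl sz; rewrite -/r hr dotBl => /eqP; rewrite subr_eq0 => /eqP.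
  by rewrite dotC /sq => ->.
have dIS : I :&: (S :\: I) = set0.
  by apply/eqP; rewrite -subset0; apply/subsetP => i; rewrite !inE => /andP[-> /andP[]].
have cIS : (#|I :|: (S :\: I)| <= 2 * n)%N.
  apply: leq_trans hc; apply: subset_leq_card; apply/subsetP => i.
  by rewrite !inE => /orP[->|/andP[_ ->]]; rewrite ?orbT.
have p5 := polar H he he0 sz sv0 dIS cIS.
have p6 : (1 - e) * norm2 z <= norm2 (Phi *m z).
  have sz' : sparse (2 * n) z.
    apply: sparse_sub sz _; apply: leq_trans hc; apply: subset_leq_card; apply: subsetUr.
  by have [] := H z sz'.
have hsa : sq a = dot (Phi *m a) (Phi *m v0) - dot (Phi *m a) (Phi *m z).
  rewrite -dotBr -hr -/r dot_mul /a -dot_restrict.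
  apply: eq_bigr => i _; rewrite !restrictE; by case: (i \in T).
rewrite sqE2 in hsa; rewrite sqE2 in p4.
have nn : forall (m : nat) (w : 'cV[R]_m), 0 <= norm2 w by move=> m w; rewrite norm2E sqrtr_ge0.
apply: (arith_upper he0 he (nn _ a) (nn _ v0) (nn _ (Phi *m z)) (nn _ z)) => //.
- rewrite hsa.
  have q1 : norm2 (Phi *m a) * norm2 (Phi *m z) <= (1 + e) * norm2 a * norm2 (Phi *m z).
    by rewrite ler_wpM2r.
  lra.
- by rewrite p4; apply: le_trans p5 _; rewrite le_refl.
Qed.

Lemma sq_restrict {R : realType} m (X : {set 'I_m}) (w : 'cV[R]_m) :
  sq (restrict X w) = \sum_(i in X) w i 0 ^+ 2.
Proof.
rewrite big_mkcond; apply: eq_bigr => i _; rewrite !restrictE.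
by case: (i \in X); rewrite ?mul0r // expr2.
Qed.

Lemma dcount {R : realType} (T : finType) (X Y : {set T}) (f g : T -> R) :
  (#|X| <= #|Y|)%N -> (forall x y, x \in X -> y \in Y -> f x <= g y) ->
  (forall y, 0 <= g y) -> \sum_(x in X) f x <= \sum_(y in Y) g y.
Proof.
move=> hc hf h0.
have [Y0|Yp] := posnP #|Y|.
  have X0 : #|X| = 0%N by lia.
  by move/cards0_eq: X0 => ->; move/cards0_eq: Y0 => ->; rewrite !big_set0.
have hY : 0 < (#|Y|%:R : R) by rewrite ltr0n.
rewrite -(ler_pM2l hY).
have e1 : #|Y|%:R * \sum_(x in X) f x = \sum_(x in X) \sum_(y in Y) f x.
  by rewrite mulr_sumr; apply: eq_bigr => x _; rewrite sumr_const mulr_natl.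
have e2 : \sum_(x in X) \sum_(y in Y) g y = #|X|%:R * \sum_(y in Y) g y.
  by rewrite sumr_const mulr_natl.
rewrite e1; apply: le_trans (_ : _ <= \sum_(x in X) \sum_(y in Y) g y) _.
  by apply: ler_sum => x hx; apply: ler_sum => y hy; apply: hf.
rewrite e2 ler_wpM2r ?ler_nat //; by apply: sumr_ge0.
Qed.

Lemma ident_card {R : realType} m n (u : 'cV[R]_m) J :
  identify n u J -> (#|J| <= n)%N.
Proof. by rewrite /identify; case: ifP => [h ->|_ [-> _]]. Qed.

Lemma ident_max {R : realType} m n (u : 'cV[R]_m) J (B : {set 'I_m}) :
  identify n u J -> (#|B| <= n)%N -> sq (restrict B u) <= sq (restrict J u).
Proof.
rewrite /identify !sq_restrict; case: ifP => [_ ->|_ [hJ hd]] hB.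
  rewrite [X in X <= _]big_mkcond [X in _ <= X]big_mkcond /=.
  apply: ler_sum => i _.
  case: (boolP (i \in supp u)); case: (i \in B) => //; rewrite ?sqr_ge0 //.
  by rewrite inE negbK => /eqP ->; rewrite expr0n.
rewrite (big_setID J) [X in _ <= X](big_setID B) /= setIC lerD2l.
apply: dcount.
- have c1 := cardsID J B; have c2 := cardsID B J.
  have c3 : #|B :&: J| = #|J :&: B| by rewrite setIC.
  by rewrite -(leq_add2l #|J :&: B|) c2 hJ -c3 c1.
- move=> x y; rewrite !inE => /andP[xJ _] /andP[_ yJ].
  have := hd y x yJ xJ => h.
  rewrite -[u x 0 ^+ 2]real_normK ?num_real // -[u y 0 ^+ 2]real_normK ?num_real //.
  by rewrite lerXn2r // nnegrE normr_ge0.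
- by move=> y; rewrite sqr_ge0.
Qed.

Lemma band {R : realType} (K : nat) (x s : R) : x <= s -> s < 2 ^+ K * x ->
  exists k, [/\ (k < K)%N, s < 2 ^+ k.+1 * x & 2 ^+ k * x <= s].
Proof.
move=> hxs; elim: K => [|K IH] h.
  by rewrite expr0 mul1r in h; move: (lt_le_trans h hxs); rewrite ltxx.
case: (ltP s (2 ^+ K * x)) => hK.
  by have [k [k1 k2 k3]] := IH hK; exists k; split => //; apply: ltnW.
by exists K; split.
Qed.

Lemma reg_exists {R : realType} m n K (u : 'cV[R]_m) (J : {set 'I_m}) :
  (#|J| <= n)%N -> (0 < K)%N -> 2 * n%:R <= ((2:R) ^+ K) ^+ 2 ->
  exists B : {set 'I_m}, [/\ B \subset J, comparable_set u B &
     sq (restrict J u) <= 2 * K%:R * sq (restrict B u)].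
Proof.
move=> hJ hK hn.
set EJ := sq (restrict J u).
set s := Num.sqrt EJ.
have hs0 : 0 <= s := sqrtr_ge0 _.
have hEJ0 : 0 <= EJ := sq_ge0 _.
have hEJ : EJ = s ^+ 2 by rewrite sqr_sqrtr.
pose B (k : nat) := [set i in J | (s < 2 ^+ k.+1 * `|u i 0|) && (2 ^+ k * `|u i 0| <= s)].
have Bsub : forall k, B k \subset J by move=> k; apply/subsetP => i; rewrite inE => /andP[].
have Bcomp : forall k, comparable_set u (B k).
  move=> k i j; rewrite !inE => /and3P[_ _ hi] /and3P[_ hj _].
  have hk : 0 < (2:R) ^+ k by rewrite exprn_gt0.
  rewrite -(ler_pM2l hk); apply: le_trans hi _; apply: ltW.
  by rewrite mulrA -exprSr.
have ule : forall i, i \in J -> `|u i 0| <= s.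
  move=> i iJ; rewrite -(sqrtr_sqr (u i 0)) ler_sqrt //.
  rewrite /EJ sq_restrict (bigD1 i) //= lerDl; apply: sumr_ge0 => *; apply: sqr_ge0.
have key : forall i, (if i \in J then u i 0 ^+ 2 else 0) <=
    \sum_(k < K) (if i \in B k then u i 0 ^+ 2 else 0) +
    (if (i \in J) && (2 ^+ K * `|u i 0| <= s) then u i 0 ^+ 2 else 0).
  move=> i.
  have sum0 : 0 <= \sum_(k < K) (if i \in B k then u i 0 ^+ 2 else 0).
    by apply: sumr_ge0 => k _; case: ifP; rewrite ?sqr_ge0.
  case: (boolP (i \in J)) => iJ /=; last by rewrite addr0.
  case: (leP (2 ^+ K * `|u i 0|) s) => hsm /=; first by rewrite lerDr.
  have [k [k1 k2 k3]] := band (ule i iJ) hsm.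
  rewrite addr0 (bigD1 (Ordinal k1)) //= inE iJ k2 k3 /= lerDl.
  by apply: sumr_ge0 => k' _; case: ifP; rewrite ?sqr_ge0.
set Esm := \sum_(i < m) (if (i \in J) && (2 ^+ K * `|u i 0| <= s) then u i 0 ^+ 2 else 0).
have Esm0 : 0 <= Esm by apply: sumr_ge0 => i _; case: ifP; rewrite ?sqr_ge0.
have tot : EJ <= \sum_(k < K) sq (restrict (B k) u) + Esm.
  have -> : EJ = \sum_(i < m) (if i \in J then u i 0 ^+ 2 else 0).
    by rewrite /EJ sq_restrict big_mkcond.
  apply: le_trans (ler_sum _ (fun i _ => key i)) _.
  rewrite big_split /= exchange_big /= lerD2r.
  by apply: ler_sum => k _; rewrite sq_restrict [X in _ <= X]big_mkcond.
have hP : 0 < ((2:R) ^+ K) ^+ 2 by rewrite exprn_gt0 // exprn_gt0.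
have sm : ((2:R) ^+ K) ^+ 2 * Esm <= n%:R * EJ.
  rewrite mulr_sumr; apply: le_trans (_ : _ <= \sum_(i < m) (if i \in J then EJ else 0)) _.
    apply: ler_sum => i _; case: ifP => [/andP[-> h]|_]; last by rewrite mulr0; case: ifP.
    rewrite hEJ -[u i 0 ^+ 2]real_normK ?num_real // -exprMn.
    by rewrite lerXn2r // nnegrE mulr_ge0 // exprn_ge0.
  rewrite -big_mkcond sumr_const -[EJ *+ _]mulr_natl.
  by apply: ler_wpM2r => //; rewrite ler_nat.
have half : EJ <= 2 * \sum_(k < K) sq (restrict (B k) u).
  have h2 : 2 * Esm <= EJ.
    rewrite -(ler_pM2l hP).
    have : 2 * (((2:R) ^+ K) ^+ 2 * Esm) <= 2 * (n%:R * EJ) by rewrite ler_pM2l.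
    have : 2 * n%:R * EJ <= ((2:R) ^+ K) ^+ 2 * EJ by apply: ler_wpM2r.
    nra.
  lra.
case: (boolP [exists k : 'I_K, EJ <= 2 * K%:R * sq (restrict (B k) u)]).
  by move/existsP => [k hk]; exists (B k); split.
rewrite negb_exists => /forallP hall; exfalso.
have lt : \sum_(k < K) (2 * K%:R * sq (restrict (B k) u)) < \sum_(k < K) EJ.
  apply: ltr_sum.
    by apply/hasP; exists (Ordinal hK); rewrite ?mem_index_enum.
  by move=> k _; rewrite ltNge; apply: hall.
rewrite -mulr_sumr sumr_const card_ord -mulr_natr in lt.
have hK0 : 0 <= (K%:R : R) by rewrite ler0n.
have : EJ * K%:R <= 2 * (\sum_(k < K) sq (restrict (B k) u)) * K%:R by apply: ler_wpM2r.
move: lt; set Sg := \sum_(k < K) _; nra.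
Qed.

Lemma comp_half {R : realType} m (u : 'cV[R]_m) (J0 S : {set 'I_m}) :
  comparable_set u J0 -> (#|J0 :&: S| <= #|J0 :\: S|)%N ->
  sq (restrict J0 u) <= 5 * sq (restrict (J0 :\: S) u).
Proof.
move=> hc hcard; rewrite !sq_restrict (big_setID S) /=.
have : \sum_(i in J0 :&: S) u i 0 ^+ 2 <= \sum_(i in J0 :\: S) (4 * u i 0 ^+ 2).
  apply: dcount => //; last by move=> y; rewrite mulr_ge0 // sqr_ge0.
  move=> x y; rewrite !inE => /andP[xJ _] /andP[_ yJ].
  have := hc x y xJ yJ => h.
  rewrite -[u x 0 ^+ 2]real_normK ?num_real // -[u y 0 ^+ 2]real_normK ?num_real //.
  have -> : (4 : R) * `|u y 0| ^+ 2 = (2 * `|u y 0|) ^+ 2 by rewrite exprMn; congr (_ * _); rewrite expr2; lra.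
  by rewrite lerXn2r // nnegrE ?normr_ge0 // mulr_ge0 // normr_ge0.
rewrite -mulr_sumr; lra.
Qed.

Lemma comp_nz {R : realType} m (u : 'cV[R]_m) (J0 : {set 'I_m}) i :
  comparable_set u J0 -> 0 < sq (restrict J0 u) -> i \in J0 -> u i 0 != 0.
Proof.
move=> hc hp iJ; apply/negP => /eqP ui.
suff : sq (restrict J0 u) = 0 by move=> h; rewrite h ltxx in hp.
rewrite sq_restrict; apply: big1 => j jJ.
have := hc j i jJ iJ; rewrite ui normr0 mulr0 => h.
have : `|u j 0| = 0 by apply/eqP; rewrite eq_le h normr_ge0.
by move/eqP; rewrite normr_eq0 => /eqP ->; rewrite expr0n.
Qed.



Lemma ln2_ge {R : realType} : 1 / 2 <= ln (2 : R).
Proof.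
have h := expR_ge1Dx (ln ((2 : R)^-1)).
rewrite lnK ?inE ?invr_gt0 // in h.
have e : ln ((2:R)^-1) = - ln 2 by rewrite lnV // posrE.
rewrite e in h.
have : (2 : R)^-1 = 1 / 2 by rewrite div1r.
move=> e2; rewrite e2 in h; lra.
by rewrite posrE invr_gt0.
Qed.

Lemma numerics {R : realType} n : (1 < n)%N ->
  let e : R := (3%:R / 100%:R) / Num.sqrt (ln (n%:R)) in
  [/\ 0 <= e, e <= 1 / 20 & exists K, [/\ (0 < K)%N, 2 * n%:R <= ((2:R) ^+ K) ^+ 2 &
       160 * K%:R * e ^+ 2 < (1 - e) ^+ 6]].
Proof.
move=> hn e.
have := trunc_log_bounds (isT : 1 < 2)%N (ltnW hn); rewrite /=.
set k := trunc_log 2 n => /andP[h1 h2].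
have hk : (0 < k)%N.
  case: (posnP k) => // k0; rewrite k0 expn1 in h2.
  by rewrite ltnNge hn in h2.
set L := ln (n%:R : R).
have hL : (k%:R / 2 : R) <= L.
  have h2k : ((2:R) ^+ k) <= n%:R by rewrite -natrX ler_nat.
  have : ln ((2:R) ^+ k) <= L.
    by rewrite ler_ln // posrE ?exprn_gt0 // ltr0n (ltnW hn).
  rewrite lnXn // -[_ *+ k]mulr_natr => h.
  apply: le_trans h.
  have h3 : 0 <= (ln (2:R) - 1 / 2) * k%:R.
    by rewrite mulr_ge0 ?ler0n // subr_ge0 ln2_ge.
  lra.
have Lpos : 0 < L by apply: lt_le_trans hL; rewrite divr_gt0 ?ltr0n.
have sL : Num.sqrt L ^+ 2 = L by rewrite sqr_sqrtr // ltW.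
have sLp : 0 < Num.sqrt L by rewrite sqrtr_gt0.
move: @e; set c : R := 3%:R / 100%:R => e.
have hc0 : 0 <= c by rewrite /c divr_ge0 // ler0n.
have hc1 : 30 * c <= 1 by rewrite /c; lra.
clearbody c.
have he0 : 0 <= e by rewrite /e divr_ge0 // ?sqrtr_ge0.
have e2 : e ^+ 2 * L = c ^+ 2.
  by rewrite /e -/L expr_div_n sL mulfVK ?gt_eqF.
have kL : (k%:R : R) <= 2 * L by lra.
have hc2 : c ^+ 2 <= 1 / 900.
  have : c * c <= (1 / 30) * (1 / 30) by apply: ler_pM; lra.
  rewrite expr2; lra.
have e2b : e ^+ 2 <= 1 / 450.
  have : 0 <= e ^+ 2 * (L - 1 / 2).
    rewrite mulr_ge0 ?sqr_ge0 // subr_ge0; apply: le_trans hL.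
    by rewrite ler_pM2r ?invr_gt0 // ler1n.
  lra.
have he1 : e <= 1 / 20.
  rewrite leNgt; apply/negP => h.
  have : (1 / 20) * (1 / 20) < e * e by apply: ltr_pM; lra.
  move=> h4; rewrite expr2 in e2b; lra.
split => //; exists k.+1; split => //.
  have hP : (2 <= 2 ^ k.+1)%N by rewrite expnS leq_pmulr // expn_gt0.
  rewrite -natrX -natrX -natrM ler_nat.
  move: h2 hP; set P := (2 ^ k.+1)%N => h2 hP.
  apply: leq_trans (_ : 2 * n <= 2 * P)%N _; first by rewrite leq_mul2l ltnW.
  by rewrite leq_mul2r hP orbT.
have kK : ((k.+1)%:R : R) <= 4 * L.
  have : (1 : R) <= k%:R by rewrite ler1n.
  rewrite -addn1 natrD; lra.
have A : 160 * (k.+1)%:R * e ^+ 2 <= 640 / 900.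
  have : 160 * (k.+1)%:R * e ^+ 2 <= 160 * (4 * L) * e ^+ 2.
    by apply: ler_wpM2r; rewrite ?sqr_ge0 // ler_pM2l.
  have -> : 160 * (4 * L) * e ^+ 2 = 640 * (e ^+ 2 * L) by ring.
  rewrite e2; lra.
have B : 9 / 10 <= (1 - e) ^+ 2 by rewrite expr2; nra.
have -> : (1 - e) ^+ 6 = ((1 - e) ^+ 2) ^+ 3 by rewrite -exprM.
set a := (1 - e) ^+ 2 in B *.
have : 729 / 1000 <= a ^+ 3.
  have : (9 / 10) * (9 / 10) <= a * a by apply: ler_pM; lra.
  move=> h; have : (9 / 10) * (9 / 10) * (9 / 10) <= a * a * a by apply: ler_pM; lra.
  by rewrite !exprS expr0 mulr1 mulrA; lra.
lra.
Qed.


Lemma lsq_init {R : realType} N d (Phi : 'M[R]_(N, d)) (x : 'cV[R]_N) :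
  lsq Phi x set0 0.
Proof.
split; first by apply/suppP => i _; rewrite mxE.
move=> z /suppP hz.
have -> : z = 0 by apply/matrixP => i j; rewrite (ord1 j) mxE hz // inE.
by [].
Qed.

Lemma step_inv {R : realType} N d n (Phi : 'M[R]_(N, d)) (v y : 'cV[R]_d) I J J0 :
  (1 < n)%N ->
  RIC Phi (2 * n) ((3%:R / 100%:R) / Num.sqrt (ln (n%:R))) -> sparse n v ->
  lsq Phi (Phi *m v) I y -> (#|I :\: supp v| <= #|I :&: supp v|)%N ->
  Phi *m v - Phi *m y != 0 ->
  identify n (Phi^T *m (Phi *m v - Phi *m y)) J ->
  regularize (Phi^T *m (Phi *m v - Phi *m y)) J J0 ->
  (#|(I :|: J0) :\: supp v| <= #|(I :|: J0) :&: supp v|)%N.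
Proof.
move=> hn H sv hl hinv hr hid [hJ0 [hcomp hmax]].
have [he0 he1 [K [hK hKn hKe]]] := @numerics R n hn.
move: H he0 he1 hKe; set e := (3%:R / 100%:R) / _ => H he0 he1 hKe.
have he : 0 <= 1 - e by lra.
set S := supp v; set v0 := restrict (S :\: I) v; set r := Phi *m v - Phi *m y.
set u := Phi^T *m r.
have [low1 low2] := state_lower H he he0 sv hl hinv.
rewrite -/S -/v0 -/r -/u in low1 low2.
have cSI : (#|S :\: I| <= n)%N.
  by apply: leq_trans (_ : #|S| <= n)%N => //; apply: subset_leq_card; apply: subsetDl.
have hJn := ident_card hid.
have EJlow := le_trans low2 (ident_max hid cSI).
have V2p : 0 < sq v0.
  rewrite lt0r sq_ge0 andbT; apply/eqP => /sq_eq0 v00.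
  have sI : supp v \subset I.
    apply/suppP => i iI; apply/eqP; apply: contraT => vi.
    have : v0 i 0 = 0 by rewrite v00 mxE.
    by rewrite /v0 restrictE !inE iI /= vi => /eqP; rewrite (negbTE vi).
  have [_ hm] := hl; have := hm v sI; rewrite subrr le_norm2 => h.
  have : sq r = 0 by apply/eqP; rewrite eq_le sq_ge0 andbT; apply: le_trans h _; rewrite /sq dot0l.
  by move/sq_eq0 => r0; rewrite -/r r0 eqxx in hr.
have [B [hBJ hBc hBE]] := reg_exists u hJn hK hKn.
have EB : sq (restrict B u) <= sq (restrict J0 u) by rewrite -le_norm2; apply: hmax.
have EJ0 : sq (restrict J (u)) <= 2 * K%:R * sq (restrict J0 u).
  apply: le_trans hBE _; apply: ler_wpM2l => //; rewrite mulr_ge0 ?ler0n //.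
have he14 : 0 < (1 - e) ^+ 4 by rewrite exprn_gt0 //; lra.
have EJ0p : 0 < sq (restrict J0 u).
  have : 0 < 2 * K%:R * sq (restrict J0 u).
    apply: lt_le_trans EJ0; apply: lt_le_trans EJlow; by rewrite mulr_gt0.
  by rewrite pmulr_rgt0 // mulr_gt0 // ltr0n.
have dJ0I : I :&: J0 = set0.
  apply/eqP; rewrite -subset0; apply/subsetP => i; rewrite !inE => /andP[iI iJ].
  have := comp_nz hcomp EJ0p iJ; by rewrite /u /r (u_zero_I hl iI) eqxx.
have half : (#|J0 :\: S| <= #|J0 :&: S|)%N.
  rewrite leqNgt; apply/negP => hlt.
  have h5 := comp_half hcomp (ltnW hlt).
  set T := J0 :\: S in h5.
  have hTS : T :&: supp v = set0.
    by apply/eqP; rewrite -subset0; apply/subsetP => i; rewrite !inE => /andP[/andP[/negP]].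
  have hTn : (#|T| <= n)%N.
    apply: leq_trans hJn; apply: subset_leq_card; apply: subset_trans hJ0; apply: subsetDl.
  have up := state_upper H he he0 sv hl hinv hTS hTn.
  rewrite -/S -/v0 -/r -/u in up.
  have up2 : (1 - e) ^+ 2 * sq (restrict T u) <= 16 * e ^+ 2 * sq v0.
    rewrite !sqE2 -exprMn.
    have -> : 16 * e ^+ 2 * norm2 v0 ^+ 2 = (4 * e * norm2 v0) ^+ 2.
      by rewrite !exprMn; congr (_ * _ * _); rewrite expr2; lra.
    have hna : 0 <= norm2 (restrict T u) by rewrite norm2E sqrtr_ge0.
    have hnv : 0 <= norm2 v0 by rewrite norm2E sqrtr_ge0.
    have x1 : 0 <= (1 - e) * norm2 (restrict T u) by apply: mulr_ge0.
    have x2 : 0 <= 4 * e * norm2 v0 by apply: mulr_ge0 => //; apply: mulr_ge0.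
    by rewrite lerXn2r.
  set V2 := sq v0 in V2p EJlow up2.
  set ET := sq (restrict T u) in h5 up2.
  set E0 := sq (restrict J0 u) in EJ0 h5 EJ0p.
  set EJ := sq (restrict J u) in EJlow EJ0.
  set a := (1 - e) ^+ 2 in up2.
  have ha : (1 - e) ^+ 4 = a * a by rewrite /a -exprD.
  have ha6 : (1 - e) ^+ 6 = a * a * a by rewrite /a -!exprD.
  rewrite ha in EJlow he14; rewrite ha6 in hKe.
  have ha0 : 0 <= a by rewrite /a sqr_ge0.
  have hK0 : (0 : R) <= K%:R by rewrite ler0n.
  have c1 : a * a * V2 <= 10 * K%:R * ET.
    apply: (le_trans EJlow); apply: (le_trans EJ0).
    have : 2 * K%:R * E0 <= 2 * K%:R * (5 * ET) by apply: ler_wpM2l => //; rewrite mulr_ge0.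
    move=> h; apply: le_trans h _; rewrite le_eqVlt; apply/orP; left; apply/eqP; ring.
  have c2 : a * (a * a * V2) <= a * (10 * K%:R * ET) by apply: ler_wpM2l.
  have c3 : 10 * K%:R * (a * ET) <= 10 * K%:R * (16 * e ^+ 2 * V2).
    by apply: ler_wpM2l => //; rewrite mulr_ge0.
  have : a * a * a * V2 < 160 * K%:R * e ^+ 2 * V2 -> False.
    by move=> h; have := ltr_pM2r V2p; move=> /(_ (a * a * a) (160 * K%:R * e ^+ 2)); lra.
  apply; rewrite ltr_pM2r //.
  have : a * a * a * V2 <= 160 * K%:R * e ^+ 2 * V2.
    have -> : a * a * a * V2 = a * (a * a * V2) by ring.
    have -> : 160 * K%:R * e ^+ 2 * V2 = 10 * K%:R * (16 * e ^+ 2 * V2) by ring.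
    apply: le_trans c2 _; have -> : a * (10 * K%:R * ET) = 10 * K%:R * (a * ET) by ring.
    exact: c3.
  rewrite ler_pM2r // => h; exfalso; move: hKe; rewrite ltNge h //.
rewrite setDUl setIUl.
have d2 : (I :&: S) :&: (J0 :&: S) = set0.
  apply/eqP; rewrite -subset0; apply/subsetP => i; rewrite !inE => /andP[/andP[iI _] /andP[iJ _]].
  by have := in_set0 i; rewrite -dJ0I inE iI iJ.
have c1 := leq_card_setU (I :\: S) (J0 :\: S).
have c2 := cardsUI (I :&: S) (J0 :&: S).
rewrite d2 cards0 addn0 in c2.
apply: leq_trans c1 _; rewrite c2; exact: leq_add.
Qed.

Lemma invariant {R : realType} N d n (Phi : 'M[R]_(N, d)) (v : 'cV[R]_d) I r :
  (1 < n)%N ->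
  RIC Phi (2 * n) ((3%:R / 100%:R) / Num.sqrt (ln (n%:R))) -> sparse n v ->
  romp_state Phi (Phi *m v) n I r ->
  exists y, [/\ lsq Phi (Phi *m v) I y, r = Phi *m v - Phi *m y &
     (#|I :\: supp v| <= #|I :&: supp v|)%N].
Proof.
move=> hn H sv; elim => [|I0 r0 J J0 y hst [y0 [hl0 hr0 hinv0]] hr hid hreg hlsq].
  exists 0; split; first exact: lsq_init.
    by rewrite mulmx0 subr0.
  by rewrite set0D set0I cards0.
exists y; split => //.
rewrite hr0 in hr hid hreg.
exact: step_inv hn H sv hl0 hinv0 hr hid hreg.
Qed.

Unset Implicit Arguments.

Theorem lemma3p6 (R : realType) (N d n : nat) (Phi : 'M[R]_(N, d))
  (v : 'cV[R]_d) (I : {set 'I_d}) (r : 'cV[R]_N) (J : {set 'I_d}) :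
  (1 < n)%N ->
  RIC Phi (2 * n) ((3%:R / 100%:R) / Num.sqrt (ln (n%:R))) ->
  v != 0 -> sparse n v ->
  romp_state Phi (Phi *m v) n I r -> r != 0 ->
  identify n (Phi^T *m r) J ->
  norm2 (restrict J (Phi^T *m r)) >=
    (4%:R / 5%:R) * norm2 (restrict (supp v :\: I) v).
Proof.
move=> hn H hv sv hst hr hid.
have [y [hl hry hinv]] := invariant hn H sv hst.
have [he0 he1 _] := @numerics R n hn.
move: H he0 he1; set e := (3%:R / 100%:R) / _ => H he0 he1.
have he : 0 <= 1 - e by lra.
have [_ low2] := state_lower H he he0 sv hl hinv.
rewrite -hry in low2.
have cSI : (#|supp v :\: I| <= n)%N.
  by apply: leq_trans (_ : #|supp v| <= n)%N => //; apply: subset_leq_card; apply: subsetDl.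
have EJ := le_trans low2 (ident_max hid cSI).
set V2 := sq _ in EJ; set EJv := sq (restrict J _) in EJ.
have hV : 0 <= V2 := sq_ge0 _.
have h45 : 16 / 25 <= (1 - e) ^+ 4.
  have : 9 / 10 <= (1 - e) ^+ 2 by rewrite expr2; nra.
  have -> : (1 - e) ^+ 4 = ((1 - e) ^+ 2) ^+ 2 by rewrite -exprM.
  move: ((1 - e) ^+ 2) => a ha.
  rewrite expr2; nra.
have : 16 / 25 * V2 <= EJv by apply: le_trans EJ; apply: ler_wpM2r.
rewrite !norm2E -/V2 -/EJv -(ler_sqrt _ (sq_ge0 _)) sqrtrM //; last by lra.
have -> : Num.sqrt (16 / 25 : R) = 4 / 5.
  have -> : (16 / 25 : R) = (4 / 5) ^+ 2 by rewrite expr2; field.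
  by rewrite sqrtr_sqr ger0_norm //; lra.
by [].
Qed.
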